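(* Let $n\ge 1$ and $0\le k\le n$, and let $L_n$ denote the number of Latin squares of order $n$. The number of preference profiles for $n$ men and $n$ women in which the men's preferences form a Latin square and there are exactly $k$ pairs of soulmates is \[L_n \binom{n}{k} (n-1)^{n-k} (n-1)!^n\] (with the convention $0^0=1$).
   Context: A preference profile for $n$ (labeled) men and $n$ (labeled) women consists of, for each man, a strict ranking of the women (bijection to $\{1,\dots,n\}$, 1 = favorite), and for each woman, a strict ranking of the men. The men's preferences form a Latin square if the $n\times n$ matrix whose $i$-th row lists the women in man $i$'s order of preference (the entry in column $r$ being the woman he ranks $r$-th) is a Latin square, i.e. for each rank $r$ the women ranked $r$-th by the different men are all distinct. Women's preferences are unrestricted. A man and a woman are soulmates if each ranks the other first. *)

(* Defs.v *)
From mathcomp Require Import all_boot all_fingroup.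
Set Implicit Arguments. Unset Strict Implicit. Unset Printing Implicit Defensive.

(* n men and n women, each labeled by 'I_n; ranks are 'I_n, rank 0 = favorite.
   A ranking of man i is a permutation sending a rank r to the woman he ranks
   at position r (rank r+1 in the 1-based convention of the paper). *)
Definition prefs (n : nat) := {ffun 'I_n -> {perm 'I_n}}.

(* A preference profile: (men's rankings, women's rankings). *)
Definition profile (n : nat) := (prefs n * prefs n)%type.

(* The men's preference matrix is a Latin square: for each rank r, the women
   ranked r-th by the different men are pairwise distinct.  (Rows are
   permutations by construction.) *)
Definition latin (n : nat) (M : prefs n) : bool :=
  [forall r : 'I_n, injectiveb (fun i : 'I_n => M i r)].

Definition soulmates (n : nat) (P : profile n.+1) (i j : 'I_n.+1) : bool :=
  (P.1 i ord0 == j) && (P.2 j ord0 == i).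

Definition num_soulmate_pairs (n : nat) (P : profile n.+1) : nat :=
  #|[set ij : 'I_n.+1 * 'I_n.+1 | soulmates P ij.1 ij.2]|.

Definition latin_count (n : nat) : nat := #|[set M : prefs n | latin M]|.

(* Main.v *)
Require Import Defs.
From mathcomp Require Import all_boot all_fingroup.
From mathcomp Require Import zify.
Set Implicit Arguments. Unset Strict Implicit. Unset Printing Implicit Defensive.

Lemma card_perm0 m (t : 'I_m.+1) :
  #|[set p : {perm 'I_m.+1} | p ord0 == t]| = m`!.
Proof.
rewrite -(card_preimset _ (@mulIg _ (tperm ord0 t))).
have -> : #|(fun p => (p * tperm ord0 t)%g) @^-1: [set p : {perm 'I_m.+1} | p ord0 == t]|
        = #|perm_on [set~ (ord0 : 'I_m.+1)]|.
  apply: eq_card => p; rewrite !inE permM.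
  have -> : (tperm ord0 t (p ord0) == t) = (p ord0 == ord0).
    by rewrite -[X in _ == X](tpermL ord0 t) (inj_eq (@perm_inj _ _)).
  apply/eqP/idP => [H | H].
    apply/subsetP => x; rewrite !inE; apply: contraNneq => ->; by rewrite H.
  by apply: (out_perm H); rewrite !inE eqxx.
by rewrite card_perm cardsC1 card_ord.
Qed.

Lemma count_ffun (I T : finType) (P : I -> pred T) a b k :
  (forall j, #|[pred x | P j x]| = a) -> (forall j, #|[pred x | ~~ P j x]| = b) ->
  #|[set W : {ffun I -> T} | #|[set j | P j (W j)]| == k]|
    = 'C(#|I|, k) * (a ^ k * b ^ (#|I| - k)).
Proof.
move=> Ha Hb.
rewrite -sum1_card.
rewrite (partition_big (fun W : {ffun I -> T} => [set j | P j (W j)]) (fun S => #|S| == k)); last first.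
  by move=> W; rewrite inE.
rewrite -card_draws -sum_nat_cond_const.
apply: eq_bigr => S /eqP HS.
rewrite sum1dep_card.
have -> : #|[set x | (x \in [set W : {ffun I -> T} | #|[set j | P j (W j)]| == k]) &&
            ([set j | P j (x j)] == S)]| = #|(family (fun j => [pred x | P j x == (j \in S)]) : simpl_pred _)|.
  apply: eq_card => W; rewrite !inE.
  apply/andP/familyP => [[_ /eqP <-] j | H].
    by rewrite !inE eqxx.
  have HS' : [set j | P j (W j)] = S.
    by apply/setP => j; rewrite inE; move: (H j); rewrite inE => /eqP.
  by rewrite HS' HS eqxx.
rewrite card_family.
have -> : forall s : seq nat, foldr muln 1 s = \prod_(i <- s) i.
  elim => [|x s IH]; first by rewrite big_nil.
  by rewrite big_cons -IH.
rewrite big_image.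
rewrite (bigID (fun j => j \in S)) /=.
rewrite (eq_bigr (fun _ => a)); last first.
  by move=> j ->; rewrite -(Ha j); apply: eq_card => x; rewrite !inE /=; exact: eqb_id.
rewrite [X in _ * X](eq_bigr (fun _ => b)); last first.
  by move=> j Hj; rewrite (negbTE Hj) -(Hb j); apply: eq_card => x; rewrite !inE /=; exact: eqbF_neg.
rewrite !prod_nat_const -HS.
congr (_ ^ _ * _ ^ _).
by rewrite -(cardsC S) addKn; apply: eq_card => x; rewrite !inE.
Qed.

Lemma num_eq n (P : profile n.+1) :
  num_soulmate_pairs P = #|[set j | P.1 (P.2 j ord0) ord0 == j]|.
Proof.
rewrite /num_soulmate_pairs.
have -> : [set ij : 'I_n.+1 * 'I_n.+1 | soulmates P ij.1 ij.2]
        = (fun j => (P.2 j ord0, j)) @: [set j | P.1 (P.2 j ord0) ord0 == j].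
  apply/setP => -[i j]; rewrite inE /soulmates /=.
  apply/andP/imsetP => [[/eqP H1 /eqP H2] | [j' Hj' [-> ->]]].
    by exists j; rewrite ?inE H2 ?H1.
  by rewrite inE in Hj'; rewrite Hj' eqxx.
by rewrite card_imset // => x y [].
Qed.

Theorem mainTheorem4 (m k : nat) (hk : k <= m.+1) :
  #|[set P : profile m.+1 | latin P.1 && (num_soulmate_pairs P == k)]|
  = latin_count m.+1 * 'C(m.+1, k) * m ^ (m.+1 - k) * (m`!) ^ m.+1.
Proof.
rewrite -sum1_card.
rewrite (partition_big (fun P : profile m.+1 => P.1) (@latin m.+1)); last first.
  by move=> P; rewrite inE => /andP[].
have inner : forall M : prefs m.+1, latin M ->
   \sum_(P in [set P : profile m.+1 | latin P.1 && (num_soulmate_pairs P == k)] | P.1 == M) 1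
   = 'C(m.+1, k) * ((m`!) ^ k * (m * m`!) ^ (m.+1 - k)).
  move=> M HM.
  rewrite sum1dep_card.
  have -> : [set x in [set P : profile m.+1 | latin P.1 && (num_soulmate_pairs P == k)] | x.1 == M]
     = (fun W => (M, W)) @: [set W : prefs m.+1 | #|[set j | M (W j ord0) ord0 == j]| == k].
    apply/setP => -[M' W]; rewrite !inE /=.
    apply/andP/imsetP => [[/andP [_ Hn] /eqP HM'] | [W' HW' [-> ->]]].
      exists W; last by rewrite HM'.
      by rewrite inE -HM'; rewrite num_eq in Hn.
    by rewrite inE in HW'; rewrite HM num_eq HW' eqxx.
  rewrite card_imset; last by move=> x y [].
  have injM : injective (fun i : 'I_m.+1 => M i ord0).
    by move: HM => /forallP /(_ ord0) /injectiveP.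
  rewrite (@count_ffun _ _ (fun j (p : {perm 'I_m.+1}) => M (p ord0) ord0 == j) (m`!) (m * m`!)) ?card_ord //.
    move=> j; rewrite -(card_perm0 (invF injM j)) cardsE; apply: eq_card => p; rewrite !inE /=.
    by rewrite -{1}(f_invF injM j) (inj_eq injM).
  move=> j.
  have H := cardC [pred p : {perm 'I_m.+1} | M (p ord0) ord0 == j].
  have E : #|[pred p : {perm 'I_m.+1} | M (p ord0) ord0 == j]| = m`!.
    rewrite -(card_perm0 (invF injM j)) cardsE; apply: eq_card => p; rewrite !inE /=.
    by rewrite -{1}(f_invF injM j) (inj_eq injM).
  rewrite E card_Sn factS in H.
  have -> : #|[pred p : {perm 'I_m.+1} | ~~ (M (p ord0) ord0 == j)]|
     = #|[predC [pred p : {perm 'I_m.+1} | M (p ord0) ord0 == j]]|.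
    by apply: eq_card => p; rewrite !inE.
  by apply/eqP; rewrite -(eqn_add2l (m`!)) H mulSn.
rewrite (eq_bigr _ inner) sum_nat_cond_const /latin_count.
rewrite expnMn -!mulnA; congr (_ * (_ * _)).
by rewrite mulnCA -expnD subnKC.
Qed.
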